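(* Let $\varphi$ be any forecasting system and $T$ a computable test supermartingale for $\varphi$. Then there is a recursive, positive, rational-valued test supermartingale $R$ for $\varphi$ such that $|4R(s)-T(s)|\le4\cdot2^{-|s|}$ for all $s\in\mathbb S$.
   Context: $\mathbb S$ is the set of finite binary strings, $\square$ the empty string, $|s|$ length, $sx$ concatenation. $\mathcal I$: nonempty closed subintervals of $[0,1]$; $\overline E_I(f)=\max_{p\in I}[pf(1)+(1-p)f(0)]$ for $f:\{0,1\}\to\mathbb R$. Forecasting system: any $\varphi:\mathbb S\to\mathcal I$. A supermartingale for $\varphi$ is $M:\mathbb S\to\mathbb R$ with $\overline E_{\varphi(s)}(M(s\,\cdot))\le M(s)$ for all $s$ ($M(s\,\cdot):x\mapsto M(sx)$); a test supermartingale is a non-negative one with $M(\square)=1$. A real map $r:\mathbb S\to\mathbb R$ is computable if there is a recursive $q:\mathbb S\times\mathbb N_0\to\mathbb Q$ with $|r(s)-q(s,N)|\le2^{-N}$ for all $s,N$; a rational-valued process is recursive if it is a recursive map $\mathbb S\to\mathbb Q$. *)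

(* Defs.v *)
From Stdlib Require Import Reals Lra Lia List.
Import ListNotations.
Open Scope R_scope.

(** Finite binary strings: [list bool]; [s ++ [x]] is the concatenation sx. *)
Definition bstr := list bool.

Record interval := mkInterval {
  lo : R; hi : R;
  lo_ge0 : 0 <= lo; lo_le_hi : lo <= hi; hi_le1 : hi <= 1 }.

Definition lin_exp (p : R) (f : bool -> R) : R := p * f true + (1 - p) * f false.

(** [upper_exp_le I f c] expresses  \overline E_I(f) <= c, i.e.
    max_{p in I} [p f(1) + (1-p) f(0)] <= c  (the max exists since I is a
    nonempty compact interval), written out as a bound for every p in I. *)
Definition upper_exp_le (I : interval) (f : bool -> R) (c : R) : Prop :=
  forall p, lo I <= p <= hi I -> lin_exp p f <= c.

Definition forecasting_system := bstr -> interval.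

Definition supermartingale (phi : forecasting_system) (M : bstr -> R) : Prop :=
  forall s, upper_exp_le (phi s) (fun x => M (s ++ [x])) (M s).

Definition test_supermartingale (phi : forecasting_system) (M : bstr -> R) : Prop :=
  supermartingale phi M /\ (forall s, 0 <= M s) /\ M [] = 1.

(** * Total recursive functions on nat (Kleene, regular minimisation).
    [rec k f] : f, viewed on argument lists of length k, is total recursive. *)
Fixpoint prim_rec (g : list nat -> nat) (h : list nat -> nat) (n : nat)
  (xs : list nat) : nat :=
  match n with
  | O => g xs
  | S m => h (m :: prim_rec g h m xs :: xs)
  end.

Inductive rec : nat -> (list nat -> nat) -> Prop :=
| rec_zero k : rec k (fun _ => 0%nat)
| rec_succ : rec 1 (fun l => S (nth 0 l 0%nat))
| rec_proj k i : (i < k)%nat -> rec k (fun l => nth i l 0%nat)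
| rec_comp k (g : list nat -> nat) (hs : list (list nat -> nat)) :
    rec (length hs) g -> (forall h, In h hs -> rec k h) ->
    rec k (fun l => g (map (fun h => h l) hs))
| rec_prim k g h : rec k g -> rec (S (S k)) h ->
    rec (S k) (fun l => prim_rec g h (hd 0%nat l) (tl l))
| rec_min k (g : list nat -> nat) (f : list nat -> nat) : rec (S k) g ->
    (forall xs, length xs = k ->
       g (f xs :: xs) = 0%nat /\ forall m, (m < f xs)%nat -> g (m :: xs) <> 0%nat) ->
    rec k f
| rec_ext k f f' : rec k f -> (forall l, length l = k -> f l = f' l) -> rec k f'.

(** Standard coding of binary strings as naturals: s |-> binary numeral 1s. *)
Definition code (s : bstr) : nat :=
  fold_left (fun n (b : bool) => (2 * n + (if b then 1 else 0))%nat) s 1%nat.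

Definition rat_of (sg num den : nat) : R :=
  (if Nat.eqb sg 0 then 1 else -1) * INR num / INR den.

Definition computable_map (r : bstr -> R) : Prop :=
  exists a b c : list nat -> nat, rec 2 a /\ rec 2 b /\ rec 2 c /\
    forall s N, (0 < c [code s; N])%nat /\
      Rabs (r s - rat_of (a [code s; N]) (b [code s; N]) (c [code s; N]))
        <= (/ 2) ^ N.

Definition recursive_rat_map (r : bstr -> R) : Prop :=
  exists a b c : list nat -> nat, rec 1 a /\ rec 1 b /\ rec 1 c /\
    forall s, (0 < c [code s])%nat /\
      r s = rat_of (a [code s]) (b [code s]) (c [code s]).

(* Main.v *)
Require Import Defs.
From Stdlib Require Import Reals Lra Lia List.
Import ListNotations.
Open Scope R_scope.

Lemma rec_comp1 k g h1 : rec 1 g -> rec k h1 -> rec k (fun l => g [h1 l]).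
Proof. intros Hg H1. exact (rec_comp k g [h1] Hg ltac:(intros h [<-|[]]; assumption)). Qed.
Lemma rec_comp2 k g h1 h2 : rec 2 g -> rec k h1 -> rec k h2 -> rec k (fun l => g [h1 l; h2 l]).
Proof. intros Hg H1 H2. exact (rec_comp k g [h1;h2] Hg ltac:(intros h [<-|[<-|[]]]; assumption)). Qed.

Lemma rec_add2 : rec 2 (fun l => nth 0 l 0 + nth 1 l 0)%nat.
Proof.
  eapply rec_ext.
  - apply (rec_prim 1 (fun l => nth 0 l 0%nat) (fun l => S (nth 0 [nth 1 l 0%nat] 0%nat))).
    + apply rec_proj; lia.
    + exact (rec_comp1 3 (fun l => S (nth 0 l 0%nat)) (fun l => nth 1 l 0%nat) rec_succ (rec_proj 3 1 ltac:(lia))).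
  - intros l Hl. destruct l as [|a [|b [|]]]; simpl in Hl; try discriminate.
    simpl. induction a as [|a IH]; simpl; [reflexivity| rewrite IH; reflexivity].
Qed.

Lemma rec_add k f g : rec k f -> rec k g -> rec k (fun l => f l + g l)%nat.
Proof. intros Hf Hg. exact (rec_comp2 k _ f g rec_add2 Hf Hg). Qed.

Lemma rec_mul2 : rec 2 (fun l => nth 0 l 0 * nth 1 l 0)%nat.
Proof.
  eapply rec_ext.
  - apply (rec_prim 1 (fun _ => 0%nat) (fun l => nth 1 l 0%nat + nth 2 l 0%nat)%nat).
    + apply rec_zero.
    + exact (rec_add 3 _ _ (rec_proj 3 1 ltac:(lia)) (rec_proj 3 2 ltac:(lia))).
  - intros l Hl. destruct l as [|a [|b [|]]]; simpl in Hl; try discriminate.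
    simpl. induction a as [|a IH]; simpl; [reflexivity| rewrite IH; lia].
Qed.

Lemma rec_mul k f g : rec k f -> rec k g -> rec k (fun l => f l * g l)%nat.
Proof. intros Hf Hg. exact (rec_comp2 k _ f g rec_mul2 Hf Hg). Qed.

Lemma rec_pred1 : rec 1 (fun l => pred (nth 0 l 0%nat)).
Proof.
  eapply rec_ext.
  - apply (rec_prim 0 (fun _ => 0%nat) (fun l => nth 0 l 0%nat)).
    + apply rec_zero.
    + apply rec_proj; lia.
  - intros l Hl. destruct l as [|a [|]]; simpl in Hl; try discriminate.
    simpl. destruct a; reflexivity.
Qed.

Lemma rec_subr2 : rec 2 (fun l => nth 1 l 0 - nth 0 l 0)%nat.
Proof.
  eapply rec_ext.
  - apply (rec_prim 1 (fun l => nth 0 l 0%nat) (fun l => pred (nth 0 [nth 1 l 0%nat] 0%nat))).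
    + apply rec_proj; lia.
    + exact (rec_comp1 3 (fun l => pred (nth 0 l 0%nat)) (fun l => nth 1 l 0%nat) rec_pred1 (rec_proj 3 1 ltac:(lia))).
  - intros l Hl. destruct l as [|a [|b [|]]]; simpl in Hl; try discriminate.
    simpl. induction a as [|a IH]; simpl; [lia| rewrite IH; lia].
Qed.

Lemma rec_sub k f g : rec k f -> rec k g -> rec k (fun l => f l - g l)%nat.
Proof. intros Hf Hg. exact (rec_comp2 k _ g f rec_subr2 Hg Hf). Qed.

Lemma rec_const k n : rec k (fun _ => n).
Proof.
  induction n.
  - apply rec_zero.
  - exact (rec_comp1 k _ _ rec_succ IHn).
Qed.

Lemma code_app s x : code (s ++ [x]) = (2 * code s + (if x then 1 else 0))%nat.
Proof. unfold code. rewrite fold_left_app. reflexivity. Qed.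

Lemma fold_ge s a : (a * 2 ^ length s <= fold_left (fun n (b : bool) => (2 * n + (if b then 1 else 0))%nat) s a)%nat.
Proof.
  revert a; induction s as [|b s IH]; intros a; simpl.
  - lia.
  - eapply Nat.le_trans; [|apply IH]. destruct b; nia.
Qed.

Lemma code_ge s : (2 ^ length s <= code s)%nat.
Proof. pose proof (fold_ge s 1). unfold code. lia. Qed.

Lemma code_ge2 s : s <> [] -> (2 <= code s)%nat.
Proof. intros H. pose proof (code_ge s). destruct s as [|b s]; [congruence|].
  simpl length in H0. rewrite Nat.pow_succ_r' in H0. pose proof (Nat.pow_nonzero 2 (length s)). lia. Qed.

Lemma n_le_pow n : (n <= 2 ^ n)%nat.
Proof. induction n; simpl; [lia|]. pose proof (Nat.pow_nonzero 2 n). lia. Qed.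

Lemma half_pow_pos n : 0 < (/2)^n.
Proof. apply pow_lt; lra. Qed.

Lemma half_pow_mono n m : (n <= m)%nat -> (/2)^m <= (/2)^n.
Proof.
  intros H; induction H; [lra|]. simpl. pose proof (half_pow_pos m). lra.
Qed.

Lemma half_pow_inv n : (/2)^n = / INR (2 ^ n).
Proof. rewrite pow_INR, pow_inv. simpl. replace (1+1) with 2 by ring. reflexivity. Qed.

Lemma half_pow_le_inv K : (1 <= K)%nat -> (/2)^K <= / INR K.
Proof.
  intros HK. rewrite half_pow_inv. apply Rinv_le_contravar.
  - apply lt_0_INR; lia.
  - apply le_INR, n_le_pow.
Qed.

Lemma inv_le_half_pow K n : (2 ^ n <= K)%nat -> / INR K <= (/2)^n.
Proof.
  intros HK. rewrite half_pow_inv. apply Rinv_le_contravar.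
  - apply lt_0_INR. pose proof (Nat.pow_nonzero 2 n). lia.
  - apply le_INR; lia.
Qed.

Lemma Rabs_le_between a b : Rabs a <= b -> - b <= a <= b.
Proof. intros H. split; [pose proof (Rabs_Ropp a); pose proof (Rle_abs (-a)); lra | pose proof (Rle_abs a); lra]. Qed.

Section S.
Variables (a0 b0 c0 : list nat -> nat).
Definition xx (l : list nat) := nth 0 l 0%nat.
Definition AA l := a0 [xx l; xx l].
Definition BB l := b0 [xx l; xx l].
Definition CC l := c0 [xx l; xx l].
Definition Num l := (3 * CC l + BB l * xx l * (1 - AA l) - BB l * xx l * (1 - (1 - AA l)))%nat.
Definition Den l := (4 * CC l * xx l)%nat.
Definition bfun l := (Den l * (1 - (xx l - 1)) + Num l * (1 - (1 - (xx l - 1))))%nat.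
End S.

Lemma rec_parts a0 b0 c0 : rec 2 a0 -> rec 2 b0 -> rec 2 c0 ->
  rec 1 (bfun a0 b0 c0) /\ rec 1 (Den c0).
Proof.
  intros Ha Hb Hc.
  assert (Hx : rec 1 xx) by (apply rec_proj; lia).
  assert (HA : rec 1 (AA a0)) by exact (rec_comp2 1 a0 xx xx Ha Hx Hx).
  assert (HB : rec 1 (BB b0)) by exact (rec_comp2 1 b0 xx xx Hb Hx Hx).
  assert (HC : rec 1 (CC c0)) by exact (rec_comp2 1 c0 xx xx Hc Hx Hx).
  assert (HD : rec 1 (Den c0)).
  { unfold Den. repeat first [apply rec_mul | apply rec_const | assumption]. }
  split; [|exact HD].
  unfold bfun, Num.
  repeat first [apply rec_add | apply rec_mul | apply rec_sub | apply rec_const | assumption].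
Qed.

Theorem lemma4p5 (phi : forecasting_system) (T : bstr -> R) :
  test_supermartingale phi T -> computable_map T ->
  exists Rm : bstr -> R,
    test_supermartingale phi Rm /\ recursive_rat_map Rm /\
    (forall s, 0 < Rm s) /\
    (forall s, Rabs (4 * Rm s - T s) <= 4 * (/ 2) ^ length s).
Proof.
  intros [Hsup [Hnn H1]] [a0 [b0 [c0 [Ha [Hb [Hc Happ]]]]]].
  set (q := fun s => rat_of (a0 [code s; code s]) (b0 [code s; code s]) (c0 [code s; code s])).
  set (Rm := fun s : bstr => match s with [] => 1 | _ => (q s + 3 / INR (code s)) / 4 end).
  assert (Hq : forall s, Rabs (T s - q s) <= (/2) ^ (code s)) by (intro s; apply Happ).
  assert (HK : forall s, (1 <= code s)%nat) by (intro s; pose proof (code_ge s); pose proof (Nat.pow_nonzero 2 (length s)); lia).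
  assert (Hu : forall s, (/2) ^ (code s) <= / INR (code s)) by (intro s; apply half_pow_le_inv, HK).
  assert (Hupos : forall s, 0 < / INR (code s)) by (intro s; apply Rinv_0_lt_compat, lt_0_INR; specialize (HK s); lia).
  assert (Rm_ne : forall s, s <> [] -> Rm s = (q s + 3 / INR (code s)) / 4).
  { intros [|b s] H; [congruence|reflexivity]. }
  assert (Rm_app : forall s x, Rm (s ++ [x]) = (q (s ++ [x]) + 3 / INR (code (s ++ [x]))) / 4).
  { intros s x. apply Rm_ne. destruct s; discriminate. }
  exists Rm. split; [|split; [|split]].
  - split; [|split].
    + intros s p Hp. unfold lin_exp. rewrite !Rm_app.
      assert (Hp01 : 0 <= p <= 1) by (destruct (phi s); simpl in *; lra).
      set (u := / INR (code s)).
      assert (Hchild : forall x, q (s ++ [x]) + 3 / INR (code (s ++ [x])) <= T (s ++ [x]) + 2 * u).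
      { intro x. pose proof (Hq (s ++ [x])) as Hqx. apply Rabs_le_between in Hqx.
        assert (Hcx : / INR (code (s ++ [x])) <= u / 2).
        { unfold u, Rdiv. rewrite code_app. rewrite <- Rinv_mult.
          apply Rinv_le_contravar.
          - apply Rmult_lt_0_compat; [apply lt_0_INR; specialize (HK s); lia| lra].
          - rewrite plus_INR, mult_INR. simpl (INR 2). destruct x; simpl; lra. }
        pose proof (Hu (s ++ [x])). unfold Rdiv. lra. }
      pose proof (Hchild true) as Ht. pose proof (Hchild false) as Hf.
      pose proof (Hsup s p Hp) as HS. unfold lin_exp in HS. simpl in HS.
      assert (E1 : p * (q (s ++ [true]) + 3 / INR (code (s ++ [true]))) <= p * (T (s ++ [true]) + 2 * u))
        by (apply Rmult_le_compat_l; lra).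
      assert (E2 : (1 - p) * (q (s ++ [false]) + 3 / INR (code (s ++ [false]))) <= (1 - p) * (T (s ++ [false]) + 2 * u))
        by (apply Rmult_le_compat_l; lra).
      destruct s as [|b s'].
      * simpl Rm. rewrite H1 in HS. assert (u = 1) by (unfold u; simpl; lra). lra.
      * rewrite Rm_ne by discriminate. fold u.
        pose proof (Hq (b :: s')) as Hqs. apply Rabs_le_between in Hqs.
        pose proof (Hu (b :: s')). fold u in H. replace (3 / INR (code (b :: s'))) with (3 * u) by (unfold u, Rdiv; ring). lra.
    + intro s. destruct s as [|b s]; [simpl; lra|].
      rewrite Rm_ne by discriminate.
      pose proof (Hq (b :: s)) as Hqs. apply Rabs_le_between in Hqs.
      pose proof (Hu (b :: s)). pose proof (Hupos (b :: s)). pose proof (Hnn (b :: s)). unfold Rdiv. lra.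
    + reflexivity.
  - exists (fun _ => 0%nat), (bfun a0 b0 c0), (Den c0).
    destruct (rec_parts a0 b0 c0 Ha Hb Hc) as [HB HD].
    split; [apply rec_zero|]. split; [exact HB|]. split; [exact HD|].
    intro s.
    destruct (Happ s (code s)) as [Cpos _].
    pose proof (HK s) as HKs.
    unfold bfun, Den, Num, AA, BB, CC, xx. cbn [nth].
    set (K := code s) in *.
    set (A := a0 [K; K]) in *. set (B := b0 [K; K]) in *. set (C := c0 [K; K]) in *.
    split; [lia|].
    unfold rat_of. cbn [Nat.eqb].
    assert (HCr : 0 < INR C) by (apply lt_0_INR; lia).
    assert (HKr : 0 < INR K) by (apply lt_0_INR; lia).
    destruct s as [|bb s].
    + replace (4 * C * K * (1 - (K - 1)) + (3 * C + B * K * (1 - A) - B * K * (1 - (1 - A))) * (1 - (1 - (K - 1))))%nat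
        with (4 * C * K)%nat by (assert (K = 1%nat) by reflexivity; subst K; lia).
      simpl Rm. assert (0 < INR (4 * C * K)) by (apply lt_0_INR; lia). field. lra.
    + assert (HK2 : (2 <= K)%nat) by (apply code_ge2; discriminate).
      rewrite Rm_ne by discriminate. fold K.
      unfold q. fold K A B C. unfold rat_of.
      destruct (Nat.eqb A 0) eqn:EA.
      * apply Nat.eqb_eq in EA.
        replace (4 * C * K * (1 - (K - 1)) + (3 * C + B * K * (1 - A) - B * K * (1 - (1 - A))) * (1 - (1 - (K - 1))))%nat
          with (3 * C + B * K)%nat by (rewrite EA; replace (K - 1)%nat with (S (K - 2)) by lia; lia).
        rewrite plus_INR, !mult_INR. simpl INR. field. lra.
      * apply Nat.eqb_neq in EA.
        assert (Hqs := Hq (bb :: s)). apply Rabs_le_between in Hqs.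
        pose proof (Hu (bb :: s)). pose proof (Hnn (bb :: s)).
        unfold q in Hqs. fold K A B C in Hqs, H. unfold rat_of in Hqs.
        destruct (Nat.eqb A 0) eqn:EA'; [apply Nat.eqb_eq in EA'; lia|].
        assert (Hbk : INR B * INR K <= INR C).
        { assert (Hbc : INR B * INR K = (INR B / INR C) * (INR C * INR K)) by (field; lra).
          assert (Hkc : INR C = (/ INR K) * (INR C * INR K)) by (field; lra).
          rewrite Hbc. apply Rle_trans with ((/ INR K) * (INR C * INR K)); [|right; field; lra].
          apply Rmult_le_compat_r; [apply Rmult_le_pos; lra|].
          unfold Rdiv in *. lra. }
        rewrite <- mult_INR in Hbk. apply INR_le in Hbk.
        replace (4 * C * K * (1 - (K - 1)) + (3 * C + B * K * (1 - A) - B * K * (1 - (1 - A))) * (1 - (1 - (K - 1))))%nat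
          with (3 * C - B * K)%nat by (replace (1 - A)%nat with 0%nat by lia; replace (K - 1)%nat with (S (K - 2)) by lia; lia).
        rewrite minus_INR by lia. rewrite !mult_INR. simpl INR. field. lra.
  - intro s. destruct s as [|b s]; [simpl; lra|].
    rewrite Rm_ne by discriminate.
    pose proof (Hq (b :: s)) as Hqs. apply Rabs_le_between in Hqs.
    pose proof (Hu (b :: s)). pose proof (Hupos (b :: s)). pose proof (Hnn (b :: s)). unfold Rdiv. lra.
  - intro s. destruct s as [|b s].
    + simpl Rm. rewrite H1. simpl. rewrite Rabs_right; lra.
    + rewrite Rm_ne by discriminate.
      pose proof (Hq (b :: s)) as Hqs. apply Rabs_le_between in Hqs.
      pose proof (code_ge (b :: s)).
      pose proof (inv_le_half_pow _ _ H).
      pose proof (half_pow_mono (length (b :: s)) (code (b :: s)) ltac:(pose proof (n_le_pow (length (b::s))); lia)).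
      pose proof (Hupos (b :: s)).
      apply Rabs_le. unfold Rdiv. lra.
Qed.
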